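(* If a variety $\Theta$ is logically perfect, then it is logically regular.
   Context: Setting: variety $\Theta$, infinite variable set $X^0$, $\Gamma^0$ its finite subsets, $W(X)$ the free $\Theta$-algebra on $X$, points $\mu:W(X)\to H$. $\Phi(X)$ is the $X$-sort of the multi-sorted algebra of first-order formulas over $\Theta$ (free multi-sorted Halmos algebra generated by equalities in $W(X)$), with valuation $Val^X_H$ into subsets of $\mathrm{Hom}(W(X),H)$, and $LKer(\mu)=\{u\in\Phi(X):\mu\in Val^X_H(u)\}$. For $\mu:W(X)\to H$ with $a_i=\mu(x_i)$, $Tp^H(\mu)$ is the set of first-order formulas $u(x_1,\dots,x_n;y_1,\dots,y_m)$ over $X^0$ with free variables in $X$ and bound variables in $X^0\setminus X$ such that $u(a_1,\dots,a_n;y_1,\dots,y_m)$ holds in $H$; it is known that $Tp^{H_1}(\mu)=Tp^{H_2}(\nu)$ iff $LKer(\mu)=LKer(\nu)$. Algebras $H_1,H_2\in\Theta$ are isotypic if for every $X\in\Gamma^0$, $\{LKer(\mu)\mid\mu:W(X)\to H_1\}=\{LKer(\nu)\mid\nu:W(X)\to H_2\}$. An algebra $H\in\Theta$ is logically homogeneous if for all points $\mu,\nu:W(X)\to H$, $Tp^H(\mu)=Tp^H(\nu)$ holds iff $\nu=\sigma\mu$ for some automorphism $\sigma$ of $H$. $H$ is logically separable if every $H'\in\Theta$ isotypic to $H$ is isomorphic to $H$. $\Theta$ is logically perfect if every $W(X)$, $X\in\Gamma^0$, is logically homogeneous, and logically regular if every $W(X)$, $X\in\Gamma^0$, is logically separable.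 *)

(* Defs.v *)
From mathcomp Require Import all_boot.
From mathcomp Require Import finmap.

Set Implicit Arguments.
Unset Strict Implicit.
Unset Printing Implicit Defensive.

Local Open Scope fset_scope.

Record signature := Signature {
  op :> Type;
  arity : op -> nat }.

Record algebra (S : signature) := Algebra {
  carrier :> Type;
  interp : forall o : S, ('I_(arity o) -> carrier) -> carrier }.

Arguments interp {S} a o _ : rename.

Inductive term (S : signature) (V : Type) : Type :=
| Var : V -> term S V
| App : forall o : S, ('I_(arity o) -> term S V) -> term S V.

Arguments Var {S V} _.
Arguments App {S V} o _.

Fixpoint eval (S : signature) (A : algebra S) (V : Type) (env : V -> A)
  (t : term S V) : A :=
  match t with
  | Var v => env v
  | App o args => interp A o (fun i => eval env (args i))
  end.

Definition is_hom (S : signature) (A B : algebra S) (f : A -> B) : Prop :=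
  forall (o : S) (args : 'I_(arity o) -> A),
    f (interp A o args) = interp B o (fun i => f (args i)).

Definition is_iso (S : signature) (A B : algebra S) (f : A -> B) : Prop :=
  is_hom f /\ bijective f.

(** * Varieties: a variety Theta is given by a set [E] of identities
    (pairs of terms in the variables X^0 = nat); its members are the
    algebras satisfying all of them. *)

Definition identities (S : signature) := term S nat * term S nat -> Prop.

Definition in_variety (S : signature) (E : identities S) (A : algebra S) : Prop :=
  forall p, E p -> forall env : nat -> A, eval env p.1 = eval env p.2.

(** * Free algebra W(X) of Theta over a finite set X of variables
    (X a finite subset of X^0 = nat), given by its universal property. *)

Definition is_free (S : signature) (E : identities S) (X : {fset nat})
  (W : algebra S) (gen : {x : nat | x \in X} -> W) : Prop :=
  in_variety E W /\
  forall H : algebra S, in_variety E H ->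
    forall f : {x : nat | x \in X} -> H,
      (exists h : W -> H, is_hom h /\ forall x, h (gen x) = f x) /\
      (forall h1 h2 : W -> H, is_hom h1 -> is_hom h2 ->
         (forall x, h1 (gen x) = f x) -> (forall x, h2 (gen x) = f x) ->
         forall w, h1 w = h2 w).

Arguments is_free {S} E X W gen.

Inductive formula (S : signature) : Type :=
| FEq  : term S nat -> term S nat -> formula S
| FNot : formula S -> formula S
| FAnd : formula S -> formula S -> formula S
| FOr  : formula S -> formula S -> formula S
| FImp : formula S -> formula S -> formula S
| FEx  : nat -> formula S -> formula S
| FAll : nat -> formula S -> formula S.

Arguments FEq {S} _ _.
Arguments FNot {S} _.
Arguments FAnd {S} _ _.
Arguments FOr {S} _ _.
Arguments FImp {S} _ _.
Arguments FEx {S} _ _.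
Arguments FAll {S} _ _.

Fixpoint tvars_in (S : signature) (P : nat -> bool) (t : term S nat) : Prop :=
  match t with
  | Var v => P v
  | App o args => forall i, tvars_in P (args i)
  end.

Fixpoint fv_in (S : signature) (P : nat -> bool) (u : formula S) : Prop :=
  match u with
  | FEq t s => tvars_in P t /\ tvars_in P s
  | FNot u1 => fv_in P u1
  | FAnd u1 u2 | FOr u1 u2 | FImp u1 u2 => fv_in P u1 /\ fv_in P u2
  | FEx v u1 | FAll v u1 => fv_in (fun x => (x == v) || P x) u1
  end.

Fixpoint bv_in (S : signature) (P : nat -> bool) (u : formula S) : Prop :=
  match u with
  | FEq _ _ => True
  | FNot u1 => bv_in P u1
  | FAnd u1 u2 | FOr u1 u2 | FImp u1 u2 => bv_in P u1 /\ bv_in P u2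
  | FEx v u1 | FAll v u1 => P v /\ bv_in P u1
  end.

(** Evaluation of terms under a partial assignment (so that possibly
    empty algebras are handled correctly): [evalR env t a] means that all
    variables of [t] are assigned and [t] evaluates to [a]. *)
Inductive evalR (S : signature) (A : algebra S) (env : nat -> option A)
  : term S nat -> A -> Prop :=
| evalR_var : forall v a, env v = Some a -> evalR env (Var v) a
| evalR_app : forall (o : S) (args : 'I_(arity o) -> term S nat)
                (vals : 'I_(arity o) -> A),
    (forall i, evalR env (args i) (vals i)) ->
    evalR env (App o args) (interp A o vals).

Definition upd (T : Type) (env : nat -> option T) (v : nat) (a : T) :
  nat -> option T := fun x => if x == v then Some a else env x.

Fixpoint sat (S : signature) (A : algebra S) (env : nat -> option A)
  (u : formula S) : Prop :=
  match u with
  | FEq t s => exists a, evalR env t a /\ evalR env s a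
  | FNot u1 => ~ sat env u1
  | FAnd u1 u2 => sat env u1 /\ sat env u2
  | FOr u1 u2 => sat env u1 \/ sat env u2
  | FImp u1 u2 => sat env u1 -> sat env u2
  | FEx v u1 => exists a : A, sat (upd env v a) u1
  | FAll v u1 => forall a : A, sat (upd env v a) u1
  end.

(** The assignment x_i |-> a_i = mu(x_i), x_i in X, induced by a point
    mu : W(X) -> H (undefined outside X). *)
Definition point_env (S : signature) (X : {fset nat}) (W H : algebra S)
  (gen : {x : nat | x \in X} -> W) (mu : W -> H) : nat -> option H :=
  fun n => omap (fun x => mu (gen x)) (insub n : option {x : nat | x \in X}).

Definition LKer (S : signature) (X : {fset nat}) (W H : algebra S)
  (gen : {x : nat | x \in X} -> W) (mu : W -> H) : formula S -> Prop :=
  fun u => fv_in (fun n => n \in X) u /\ sat (point_env gen mu) u.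

Definition Tp (S : signature) (X : {fset nat}) (W H : algebra S)
  (gen : {x : nat | x \in X} -> W) (mu : W -> H) : formula S -> Prop :=
  fun u => fv_in (fun n => n \in X) u /\ bv_in (fun n => n \notin X) u /\
           sat (point_env gen mu) u.

Definition isotypic (S : signature) (E : identities S) (H1 H2 : algebra S) : Prop :=
  forall (X : {fset nat}) (W : algebra S) (gen : {x : nat | x \in X} -> W),
    is_free E X W gen ->
    (forall mu : W -> H1, is_hom mu ->
       exists nu : W -> H2, is_hom nu /\ forall u, LKer gen mu u <-> LKer gen nu u) /\
    (forall nu : W -> H2, is_hom nu ->
       exists mu : W -> H1, is_hom mu /\ forall u, LKer gen mu u <-> LKer gen nu u).

Definition logically_homogeneous (S : signature) (E : identities S)
  (H : algebra S) : Prop :=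
  forall (X : {fset nat}) (W : algebra S) (gen : {x : nat | x \in X} -> W),
    is_free E X W gen ->
    forall mu nu : W -> H, is_hom mu -> is_hom nu ->
      ((forall u, Tp gen mu u <-> Tp gen nu u) <->
       exists sigma : H -> H, is_iso sigma /\ forall w, nu w = sigma (mu w)).

Definition logically_separable (S : signature) (E : identities S)
  (H : algebra S) : Prop :=
  forall H' : algebra S, in_variety E H' -> isotypic E H H' ->
    exists f : H -> H', is_iso f.

Definition logically_perfect (S : signature) (E : identities S) : Prop :=
  forall (X : {fset nat}) (W : algebra S) (gen : {x : nat | x \in X} -> W),
    is_free E X W gen -> logically_homogeneous E W.

Definition logically_regular (S : signature) (E : identities S) : Prop :=
  forall (X : {fset nat}) (W : algebra S) (gen : {x : nat | x \in X} -> W),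
    is_free E X W gen -> logically_separable E W.

(* Main.v *)
Require Import Defs.
From mathcomp Require Import all_boot finmap.
From Stdlib Require Import ClassicalEpsilon FunctionalExtensionality PropExtensionality ProofIrrelevance.

Set Implicit Arguments.
Unset Strict Implicit.

Section Gen.
Variable S : signature.

Lemma eval_hom (A B : algebra S) (f : A -> B) (V : Type) (env : V -> A) t :
  is_hom f -> f (eval env t) = eval (fun v => f (env v)) t.
Proof.
move=> hf; elim: t => [v|o args IH] //=.
rewrite hf; congr (interp B o); apply: functional_extensionality => i; exact: IH.
Qed.

Lemma eval_ext (A : algebra S) (V : Type) (e1 e2 : V -> A) t :
  (forall v, e1 v = e2 v) -> eval e1 t = eval e2 t.
Proof.
move=> he; elim: t => [v|o args IH] //=.
congr (interp A o); apply: functional_extensionality => i; exact: IH.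
Qed.

Lemma tvars_mono (P P' : nat -> bool) (t : term S nat) :
  (forall n, P n -> P' n) -> tvars_in P t -> tvars_in P' t.
Proof. move=> hP; elim: t => [v|o args IH] /=; [exact: hP | move=> h i; exact: IH]. Qed.

Lemma fv_mono (u : formula S) : forall (P P' : nat -> bool),
  (forall n, P n -> P' n) -> fv_in P u -> fv_in P' u.
Proof.
elim: u => [t s|u IH|u1 IH1 u2 IH2|u1 IH1 u2 IH2|u1 IH1 u2 IH2|v u IH|v u IH] P P' hP /=.
- by case=> h1 h2; split; apply: tvars_mono hP _.
- exact: IH.
- by case=> h1 h2; split; [apply: IH1 hP h1| apply: IH2 hP h2].
- by case=> h1 h2; split; [apply: IH1 hP h1| apply: IH2 hP h2].
- by case=> h1 h2; split; [apply: IH1 hP h1| apply: IH2 hP h2].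
- apply: IH => n /orP [->//|/hP ->]; by rewrite orbT.
- apply: IH => n /orP [->//|/hP ->]; by rewrite orbT.
Qed.

Lemma evalR_ext (A : algebra S) (P : nat -> bool) (env1 env2 : nat -> option A) t a :
  (forall n, P n -> env1 n = env2 n) -> tvars_in P t -> evalR env1 t a -> evalR env2 t a.
Proof.
move=> he ht hr; elim: hr ht => [v b hv|o args vals _ IH] /=.
- move=> hP; apply: evalR_var; by rewrite -he.
- move=> h; apply: evalR_app => i; exact: IH.
Qed.

Lemma evalR_tvars (A : algebra S) (P : nat -> bool) (env : nat -> option A) t a :
  (forall n, env n <> None -> P n) -> evalR env t a -> tvars_in P t.
Proof.
move=> he hr; elim: hr => [v b hv|o args vals _ IH] /=.
- by apply: he; rewrite hv.
- exact: IH.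
Qed.

Lemma evalR_inv (A : algebra S) (env : nat -> option A) t b :
  evalR env t b ->
  match t with
  | Var v => env v = Some b
  | App o args => exists vals, (forall i, evalR env (args i) (vals i)) /\ b = interp A o vals
  end.
Proof. case=> [v a hv|o args vals h] //; by exists vals. Qed.

Lemma evalR_det (A : algebra S) (env : nat -> option A) t a b :
  evalR env t a -> evalR env t b -> a = b.
Proof.
move=> hr; elim: hr b => [v a' hv|o args vals _ IH] b /evalR_inv.
- by rewrite hv => -[].
- case=> vals' [hv ->]; congr (interp A o).
  apply: functional_extensionality => i; exact: IH.
Qed.

Lemma evalR_hom (A B : algebra S) (f : A -> B) (env : nat -> option A)
   (env2 : nat -> option B) t a :
  is_hom f -> (forall n, env2 n = omap f (env n)) -> evalR env t a -> evalR env2 t (f a).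
Proof.
move=> hf he hr; elim: hr => [v b hv|o args vals _ IH].
- by apply: evalR_var; rewrite he hv.
- rewrite hf; exact: evalR_app.
Qed.

Lemma sat_ext (A : algebra S) (u : formula S) : forall (P : nat -> bool)
  (env1 env2 : nat -> option A),
  fv_in P u -> (forall n, P n -> env1 n = env2 n) -> (sat env1 u <-> sat env2 u).
Proof.
elim: u => [t s|u IH|u1 IH1 u2 IH2|u1 IH1 u2 IH2|u1 IH1 u2 IH2|v u IH|v u IH]
  P env1 env2 /= hfv he.
- case: hfv => ht hs; split; case=> a [h1 h2]; exists a; split.
  + exact: evalR_ext he ht h1.
  + exact: evalR_ext he hs h2.
  + by apply: evalR_ext _ ht h1 => n /he.
  + by apply: evalR_ext _ hs h2 => n /he.
- by rewrite (IH P env1 env2).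
- case: hfv => h1 h2; by rewrite (IH1 P env1 env2) // (IH2 P env1 env2).
- case: hfv => h1 h2; by rewrite (IH1 P env1 env2) // (IH2 P env1 env2).
- case: hfv => h1 h2; by rewrite (IH1 P env1 env2) // (IH2 P env1 env2).
- have key : forall a, sat (upd env1 v a) u <-> sat (upd env2 v a) u.
    move=> a; apply: IH hfv _ => n /orP [hn|hn]; rewrite /upd; case: ifP => // hnv.
    - by rewrite hnv in hn.
    - by apply: he.
  split; case=> a h; exists a; by apply/key.
- have key : forall a, sat (upd env1 v a) u <-> sat (upd env2 v a) u.
    move=> a; apply: IH hfv _ => n /orP [hn|hn]; rewrite /upd; case: ifP => // hnv.
    - by rewrite hnv in hn.
    - by apply: he.
  split=> h a; by apply/key.
Qed.

End Gen.
Set Implicit Arguments.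
Unset Strict Implicit.

Section Free.
Variable S : signature.
Variable E : identities S.
Variable V : Type.

Definition Rel (t s : term S V) : Prop :=
  forall A : algebra S, in_variety E A -> forall e : V -> A, eval e t = eval e s.

Definition Q := {P : term S V -> Prop | exists t, P = Rel t}.
Definition cls (t : term S V) : Q := exist _ (Rel t) (ex_intro _ t erefl).
Definition rep (q : Q) : term S V :=
  proj1_sig (constructive_indefinite_description _ (proj2_sig q)).

Lemma Q_eq (q1 q2 : Q) : proj1_sig q1 = proj1_sig q2 -> q1 = q2.
Proof.
case: q1 q2 => [P1 h1] [P2 h2] /= e; subst P2; f_equal; apply: proof_irrelevance.
Qed.

Lemma cls_rep q : cls (rep q) = q.
Proof.
apply: Q_eq => /=; rewrite /rep.
case: (constructive_indefinite_description _ _) => t /= ->; done.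
Qed.

Lemma Rel_refl t : Rel t t. Proof. by []. Qed.

Lemma cls_eq t s : cls t = cls s <-> Rel t s.
Proof.
split.
- move=> h; have := f_equal (@proj1_sig _ _) h => /= ->; exact: Rel_refl.
- move=> h; apply: Q_eq => /=; apply: functional_extensionality => r.
  apply: propositional_extensionality; split=> h' A hA e.
  + by rewrite -(h A hA e) (h' A hA e).
  + by rewrite (h A hA e) (h' A hA e).
Qed.

Lemma Rel_rep_cls t : Rel (rep (cls t)) t.
Proof. apply/cls_eq; exact: cls_rep. Qed.

Lemma Rel_app o (a b : 'I_(arity o) -> term S V) :
  (forall i, Rel (a i) (b i)) -> Rel (App o a) (App o b).
Proof.
move=> h A hA e /=; congr (interp A o); apply: functional_extensionality => i.
exact: h.
Qed.

Definition FA : algebra S :=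
  @Algebra S Q (fun o args => cls (App o (fun i => rep (args i)))).

Fixpoint subst (sg : nat -> term S V) (t : term S nat) : term S V :=
  match t with
  | Var n => sg n
  | App o args => App o (fun i => subst sg (args i))
  end.

Lemma eval_subst (A : algebra S) (e : V -> A) sg t :
  eval e (subst sg t) = eval (fun n => eval e (sg n)) t.
Proof.
elim: t => [n|o args IH] //=; congr (interp A o).
apply: functional_extensionality => i; exact: IH.
Qed.

Lemma eval_FA (env : nat -> FA) t : eval env t = cls (subst (fun n => rep (env n)) t).
Proof.
elim: t => [n|o args IH] /=; first by rewrite cls_rep.
apply/cls_eq; apply: Rel_app => i; apply/cls_eq; rewrite cls_rep; exact: IH.
Qed.

Lemma eval_gen (t : term S V) : eval (fun v => (cls (Var v) : FA)) t = cls t.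
Proof.
elim: t => [v|o args IH] //=.
apply/cls_eq; apply: Rel_app => i; rewrite IH; exact: Rel_rep_cls.
Qed.

Lemma FA_in_variety : in_variety E FA.
Proof.
move=> p hp env; rewrite !eval_FA; apply/cls_eq => A hA e.
by rewrite !eval_subst; apply: hA.
Qed.

End Free.

Lemma free_exists (S : signature) (E : identities S) (Y : {fset nat}) :
  exists (W : algebra S) (gen : {x : nat | x \in Y} -> W), is_free E Y W gen.
Proof.
exists (@FA S E {x : nat | x \in Y}), (fun v => @cls S E _ (Var v)); split.
  exact: FA_in_variety.
move=> H hH f; split.
- exists (fun q => eval f (rep q)); split.
  + move=> o args /=.
    rewrite (Rel_rep_cls (App o (fun i => rep (args i)))) //=.
  + move=> x /=; by rewrite (Rel_rep_cls (Var x)).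
- move=> h1 h2 hh1 hh2 e1 e2 w.
  rewrite -(cls_rep w) -eval_gen (eval_hom _ _ hh1) (eval_hom _ _ hh2).
  by apply: eval_ext => v; rewrite e1 e2.
Qed.
Set Implicit Arguments.
Unset Strict Implicit.
Local Open Scope fset_scope.

Section Pt.
Variable S : signature.

Lemma point_env_some (X : {fset nat}) (W H : algebra S) (gen : {x : nat | x \in X} -> W)
  (mu : W -> H) n (hn : n \in X) :
  point_env gen mu n = Some (mu (gen (exist _ n hn))).
Proof. by rewrite /point_env (insubT (fun n => n \in X) hn). Qed.

Lemma point_env_none (X : {fset nat}) (W H : algebra S) (gen : {x : nat | x \in X} -> W)
  (mu : W -> H) n : n \notin X -> point_env gen mu n = None.
Proof. by move=> hn; rewrite /point_env insubN. Qed.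

Lemma point_env_def (X : {fset nat}) (W H : algebra S) (gen : {x : nat | x \in X} -> W)
  (mu : W -> H) n : point_env gen mu n <> None -> n \in X.
Proof. by case hn: (n \in X) => //; rewrite point_env_none ?hn. Qed.

Lemma point_env_comp (X : {fset nat}) (W H H2 : algebra S) (gen : {x : nat | x \in X} -> W)
  (mu : W -> H) (f : H -> H2) (f2 : W -> H2) n :
  (forall w, f2 w = f (mu w)) -> point_env gen f2 n = omap f (point_env gen mu n).
Proof. by move=> h; rewrite /point_env; case: (insub n) => //= x; rewrite h. Qed.

Lemma terms_exist (E : identities S) (X : {fset nat}) (W : algebra S)
  (gen : {x : nat | x \in X} -> W) :
  is_free E X W gen -> forall w, exists t, evalR (point_env gen id) t w.
Proof.
move=> [hW hfree].
pose P (w : W) := exists t, evalR (point_env gen id) t w.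
have cl : forall o (args : 'I_(arity o) -> {w | P w}), P (interp W o (fun i => proj1_sig (args i))).
  move=> o args.
  pose ts i := proj1_sig (constructive_indefinite_description _ (proj2_sig (args i))).
  exists (App o ts); apply: evalR_app => i; rewrite /ts.
  by case: (constructive_indefinite_description _ _).
pose B := @Algebra S {w | P w} (fun o args => exist _ _ (cl o args)).
have hval : is_hom (fun b : B => proj1_sig b) by [].
have hB : in_variety E B.
  move=> p hp env; apply: eq_sig_hprop; first by move=> *; apply: proof_irrelevance.
  by rewrite !(eval_hom _ _ hval); apply: hW.
have pg : forall x, P (gen x).
  move=> x; exists (Var (proj1_sig x)); apply: evalR_var.
  by case: x => n hn; rewrite (point_env_some _ _ hn).
case: (hfree B hB (fun x => exist _ _ (pg x))) => [[h [hh hg]] _].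
case: (hfree W hW gen) => _ uniq.
move=> w; have <- : proj1_sig (h w) = w.
  apply: (uniq (fun w => proj1_sig (h w)) id) => //.
  - by move=> o args; rewrite hh.
  - by move=> x; rewrite hg.
exact: proj2_sig (h w).
Qed.

End Pt.

Theorem theorem3p11 (S : signature) (E : identities S) :
  logically_perfect E -> logically_regular E.
Proof.
move=> perf X W gen free H' hH' iso.
have hfree := free.
case: hfree => hW hfW.
have hid : is_hom (@id W) by [].
case: (iso X W gen free) => [iso1 iso2].
case: (iso1 id hid) => nu [hnu knu].
have term_of := terms_exist free.
have env_nu : forall n, point_env gen nu n = omap nu (point_env gen id n).
  by move=> n; apply: point_env_comp.
have inj : forall w1 w2, nu w1 = nu w2 -> w1 = w2.
  move=> w1 w2 e.
  case: (term_of w1) => t1 h1; case: (term_of w2) => t2 h2.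
  have hu : LKer gen nu (FEq t1 t2).
    split; first by split; apply: evalR_tvars (@point_env_def _ _ _ _ _ _) _; eauto.
    exists (nu w1); split; first exact: evalR_hom hnu env_nu h1.
    rewrite e; exact: evalR_hom hnu env_nu h2.
  case/knu: hu => _ [a [ha1 ha2]].
  by rewrite (evalR_det h1 ha1) (evalR_det h2 ha2).
have surj : forall h, exists w, nu w = h.
  move=> h.
  pose y := (\max_(i <- X) i).+1.
  have yX : y \notin X.
    apply/negP => hy; have := leq_bigmax_seq (F:=fun i : nat => i) (P:=predT) y hy (erefl true).
    by rewrite /y ltnn.
  pose Y := y |` X.
  have XY : forall n, n \in X -> n \in Y by move=> n hn; rewrite in_fset1U hn orbT.
  have yY : y \in Y by rewrite in_fset1U eqxx.
  case: (free_exists E Y) => W' [gen' free'].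
  case: (free') => hW' hfW'.
  pose f (x : {x : nat | x \in Y}) : H' :=
    match (insub (proj1_sig x) : option {x : nat | x \in X}) with
    | Some x' => nu (gen x') | None => h end.
  case: (hfW' H' hH' f) => [[nu' [hnu' gnu']] _].
  case: (iso Y W' gen' free') => _ iso2'.
  case: (iso2' nu' hnu') => mu' [hmu' kmu'].
  have agree_nu : forall n, n \in X -> point_env gen' nu' n = point_env gen nu n.
    move=> n hn; rewrite (point_env_some _ _ (XY n hn)) (point_env_some _ _ hn) gnu'.
    by rewrite /f /= (insubT (fun n => n \in X) hn).
  have nu'y : point_env gen' nu' y = Some h.
    by rewrite (point_env_some _ _ yY) gnu' /f /= insubN.
  pose incl (x : {x : nat | x \in X}) : {x : nat | x \in Y} :=
    exist _ (proj1_sig x) (XY _ (proj2_sig x)).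
  case: (hfW W hW (fun x => mu' (gen' (incl x)))) => [[al [hal gal]] _].
  have agree_mu : forall n, n \in X -> point_env gen al n = point_env gen' mu' n.
    move=> n hn; rewrite (point_env_some _ _ (XY n hn)) (point_env_some _ _ hn) gal.
    by congr (Some (mu' (gen' _))); apply: val_inj.
  have tp : forall u, Tp gen id u <-> Tp gen al u.
    move=> u; rewrite /Tp; split; case=> hfv [hbv hs]; do 2 split => //.
    - have hfvY := fv_mono XY hfv.
      rewrite (sat_ext hfv agree_mu).
      have := (kmu' u).2; rewrite /LKer => k; apply: (proj2 (k _)); split => //.
      rewrite (sat_ext hfv agree_nu); exact: (proj2 ((knu u).1 (conj hfv hs))).
    - have hfvY := fv_mono XY hfv.
      rewrite (sat_ext hfv agree_mu) in hs.
      have [_ hs2] := (kmu' u).1 (conj hfvY hs).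
      rewrite (sat_ext hfv agree_nu) in hs2.
      exact: (proj2 ((knu u).2 (conj hfv hs2))).
  have [sg [[hsg bsg] esg]] := (perf X W gen free X W gen free id al hid hal).1 tp.
  case: bsg => g sgK gK.
  pose w := mu' (gen' (exist _ y yY)).
  case: (term_of (g w)) => t ht.
  have tX : tvars_in (fun n => n \in X) t.
    exact: evalR_tvars (@point_env_def _ _ _ _ _ _) ht.
  have hal_t : evalR (point_env gen al) t w.
    rewrite -[w]gK; apply: evalR_hom hsg _ ht => n.
    exact: point_env_comp.
  have hmu_t : evalR (point_env gen' mu') t w by exact: evalR_ext agree_mu tX hal_t.
  have hu : LKer gen' mu' (FEq (Var y) t).
    split; first by split => //; exact: tvars_mono XY tX.
    exists w; split => //; apply: evalR_var; exact: point_env_some.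
  case/kmu': hu => _ [a [ha1 ha2]].
  move/evalR_inv: ha1; rewrite nu'y; case=> ea; subst a.
  exists (g w); apply: evalR_det (evalR_hom hnu env_nu ht) _.
  apply: (evalR_ext _ tX ha2) => n hn; by rewrite agree_nu.
pose gi (h : H') : W := proj1_sig (constructive_indefinite_description _ (surj h)).
have giK : forall h, nu (gi h) = h.
  by move=> h; rewrite /gi; case: (constructive_indefinite_description _ _).
exists nu; split => //; exists gi => [w|h]; last exact: giK.
by apply: inj; rewrite giK.
Qed.
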